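(* Let $\mathcal{W}$ be a periodic labeled wedge of period $p$ and preperiod $q$, $k\in\mathbb{N}$, and let $\pi_k:\mathbb{R}^{\mathcal{V}_k}\to\mathbb{R}^{\mathcal{V}_1}$ and $A_k$ be as below. Then the characteristic polynomial of the restriction of $A_k$ to $\ker(\pi_k)$ is a product of cyclotomic polynomials and $x^d$ for some integer $d\ge0$.
   Context: $\Sigma=\{(i,j)\in\mathbb{N}^2:1\le i\le j\}$; a labeled wedge is $\Phi:\Sigma\to\{N,S,E\}$. Its graph $\Gamma$: vertices $\Sigma$; no edges out of $E$-vertices; $(i,j)\to(i+1,j+1)$ out of $N$-vertices; $(i,j)\to(1,i+1)$ and $(i,j)\to(1,j+1)$ out of $S$-vertices. For $p\ge1,q\ge0$: $i\equiv_{p,q}j$ iff $i=j$ or ($\min\{i,j\}\ge q+1$ and $i\equiv j\bmod p$); on $\Sigma$, $(i,j)\equiv_{p,q}(k,l)$ iff ($i\equiv_{p,q}k$, $j\equiv_{p,q}l$) or ($i\equiv_{p,q}l$, $j\equiv_{p,q}k$). $\mathcal{W}$ is periodic of period $p$ and preperiod $q$ if equivalent vertices have equal labels and $(i,j)$ is labeled $E$ iff $i\equiv_{p,q}j$. $\Gamma_k$ is the quotient of $\Gamma$ by $\equiv_{kp,q}$ (vertex set $\mathcal{V}_k$ = classes; number of edges $[v]\to[w]$ = number of edges from $v$ to members of $[w]$), with adjacency operator $A_k(e_v)=\sum_w\#(v\to w)e_w$ on $\mathbb{R}^{\mathcal{V}_k}$. $\pi_k$ is the linear map with $\pi_k(e_v)=e_{[v]}$,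 where $[v]$ is the $\equiv_{p,q}$-class (vertex of $\Gamma_1$) of $v$. One has $A_1\circ\pi_k=\pi_k\circ A_k$, so $A_k$ preserves $\ker(\pi_k)$. *)

(* Defs.v *)
From HB Require Import structures.
From mathcomp Require Import all_boot all_order all_algebra.
From mathcomp Require Import cyclotomic.
From mathcomp Require Import reals.
Set Implicit Arguments. Unset Strict Implicit. Unset Printing Implicit Defensive.
Import Order.TTheory GRing.Theory Num.Theory.

Inductive label := LN | LS | LE.

(* A labeled wedge Phi : Sigma -> {N,S,E}; it is represented as a function on
   nat * nat whose values outside Sigma = {(i,j) | 1 <= i <= j} are irrelevant. *)
Definition inSigma (u : nat * nat) : bool := (1 <= u.1) && (u.1 <= u.2).

Definition eqpq (p q i j : nat) : bool :=
  (i == j) || ((q < minn i j) && (i == j %[mod p])).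

Definition eqpqS (p q : nat) (u v : nat * nat) : bool :=
  (eqpq p q u.1 v.1 && eqpq p q u.2 v.2) || (eqpq p q u.1 v.2 && eqpq p q u.2 v.1).

Definition periodic_wedge (Phi : nat -> nat -> label) (p q : nat) : Prop :=
  0 < p /\
  (forall u v, inSigma u -> inSigma v -> eqpqS p q u v -> Phi u.1 u.2 = Phi v.1 v.2) /\
  (forall i j, inSigma (i, j) -> (Phi i j = LE <-> eqpq p q i j)).

Definition out_edges (Phi : nat -> nat -> label) (u : nat * nat) : seq (nat * nat) :=
  match Phi u.1 u.2 with
  | LN => [:: (u.1.+1, u.2.+1)]
  | LS => [:: (1, u.1.+1); (1, u.2.+1)]
  | LE => [::]
  end.

(* Finite vertex set of the quotient Gamma modulo ==_{m,q} (m = k p >= 1):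
   a class is represented by its unique sorted reduced pair (a+1, b+1) with
   0 <= a <= b <= N, where N = q + m - 1. *)
Definition Vt N := {x : 'I_N.+1 * 'I_N.+1 | (x.1 <= x.2)%N}.

Definition vdim (m q : nat) := (q + m).-1.

Definition redn (m q i : nat) : nat := (
  if i <= q then i else q.+1 + (i - q.+1) %% m)%N.

Definition v0 N : Vt N := exist _ (ord0, ord0) (leqnn 0).

Definition cls (m q : nat) (u : nat * nat) : Vt (vdim m q) :=
  let a := (redn m q u.1).-1 in
  let b := (redn m q u.2).-1 in
  insubd (v0 (vdim m q)) (inord (minn a b), inord (maxn a b)).

Definition rep N (v : Vt N) : nat * nat := (((sval v).1).+1, ((sval v).2).+1).

Local Open Scope ring_scope.

(* Adjacency operator A_k of Gamma_k (quotient mod ==_{kp,q}) in row-vector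
   convention: e_v *m A = sum_w #(v -> w) e_w. *)
Definition Amx (R : nzRingType) (Phi : nat -> nat -> label) (m q : nat)
  : 'M[R]_#|{: Vt (vdim m q)}| :=
  \matrix_(a, b)
    (count (fun u => cls m q u == enum_val b) (out_edges Phi (rep (enum_val a))))%:R.

(* pi_k : R^{V_k} -> R^{V_1}, e_[v]_k |-> e_[v]_1 *)
Definition Pmx (R : nzRingType) (p q k : nat)
  : 'M[R]_(#|{: Vt (vdim (k * p) q)}|, #|{: Vt (vdim p q)}|) :=
  \matrix_(a, b) (cls p q (rep (enum_val a)) == enum_val b)%:R.

Definition kerB (R : fieldType) (p q k : nat) :=
  row_base (kermx (Pmx R p q k)).

Definition restrA (R : fieldType) (Phi : nat -> nat -> label) (p q k : nat)
  : 'M[R]_(\rank (kermx (Pmx R p q k))) :=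
  kerB R p q k *m Amx R Phi (k * p) q *m pinvmx (kerB R p q k).

(* Main.v *)
Require Import Defs.
From HB Require Import structures.
From mathcomp Require Import all_boot all_order all_algebra.
From mathcomp Require Import cyclotomic.
From mathcomp Require Import reals.
From mathcomp Require Import all_field.
From mathcomp Require Import zify.
Import Order.TTheory GRing.Theory Num.Theory.

Set Implicit Arguments. Unset Strict Implicit. Unset Printing Implicit Defensive.


Section Redn.
Variables (m q : nat).
Hypothesis m_gt0 : (0 < m)%N.

Lemma redn_small i : (i <= q)%N -> redn m q i = i.
Proof. by rewrite /redn => ->. Qed.

Lemma redn_big i : (q < i)%N -> redn m q i = (q.+1 + (i - q.+1) %% m)%N.
Proof. by move=> H; rewrite /redn ifN // -ltnNge. Qed.

Lemma redn_gt0 i : (0 < i)%N -> (0 < redn m q i)%N.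
Proof. by rewrite /redn; case: ifP. Qed.

Lemma redn_gtq i : (q < redn m q i)%N = (q < i)%N.
Proof.
rewrite /redn; case: ifP => H; first by [].
apply/idP/idP => _; last by rewrite ltnS leq_addr.
by move/negbT: H; rewrite -ltnNge.
Qed.

Lemma redn_le i : (redn m q i <= q + m)%N.
Proof.
rewrite /redn; case: ifP => H; first lia.
have := ltn_pmod (i - q.+1) m_gt0; move: ((i - q.+1) %% m) => r; lia.
Qed.

Lemma redn_id i : (i <= q + m)%N -> redn m q i = i.
Proof.
rewrite /redn; case: ifP => H Hi //.
rewrite modn_small; lia.
Qed.

Lemma redn_redn i : redn m q (redn m q i) = redn m q i.
Proof. exact/redn_id/redn_le. Qed.

Lemma redn_addr i c : (0 < i)%N -> redn m q (redn m q i + c) = redn m q (i + c).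
Proof.
move=> i0; case: (leqP i q) => Hi; first by rewrite (redn_small Hi).
rewrite (redn_big Hi).
move: (modnDml (i - q.+1) c m).
move: ((i - q.+1) %% m) => r Er.
rewrite [in LHS]redn_big; last lia.
rewrite [in RHS]redn_big; last lia.
congr (_ + _)%N.
have -> : (q.+1 + r + c - q.+1 = r + c)%N by lia.
have -> : (i + c - q.+1 = (i - q.+1) + c)%N by lia.
exact: Er.
Qed.

Lemma redn_S i : (0 < i)%N -> redn m q (redn m q i).+1 = redn m q i.+1.
Proof. by move=> i0; have := redn_addr 1 i0; rewrite !addn1. Qed.

Lemma redn_addm i : (q < i)%N -> redn m q (i + m) = redn m q i.
Proof.
move=> Hi; have Hm : (q < i + m)%N by apply: (leq_trans Hi); rewrite leq_addr.
rewrite (redn_big Hm) (redn_big Hi).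
have -> : (i + m - q.+1 = (i - q.+1) + m)%N by rewrite addnC -addnBA // addnC.
by rewrite modnDr.
Qed.

End Redn.

Lemma redn_dvd p m q i : (0 < p)%N -> (p %| m)%N -> (0 < m)%N ->
  redn p q (redn m q i) = redn p q i.
Proof.
move=> p0 pm m0; case: (leqP i q) => Hi; first by rewrite !redn_small.
rewrite (@redn_big m q i Hi).
move: (modn_dvdm (i - q.+1) pm).
move: ((i - q.+1) %% m) => r Er.
rewrite [in LHS]redn_big; last lia.
rewrite [in RHS]redn_big; last lia.
congr (_ + _)%N.
have -> : (q.+1 + r - q.+1 = r)%N by lia.
by [].
Qed.

Lemma redn_eqpq p m q i : (0 < p)%N -> (p %| m)%N -> (0 < m)%N ->
  eqpq p q (redn m q i) i.
Proof.
move=> p0 pm m0; rewrite /eqpq; case: (leqP i q) => Hi.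
  by rewrite redn_small // eqxx.
apply/orP; right; apply/andP; split.
  have := redn_gtq m q i; rewrite Hi => H.
  by rewrite leq_min H Hi.
rewrite redn_big //.
apply/eqP.
rewrite -[in LHS]modnDmr (modn_dvdm _ pm) modnDmr.
by rewrite subnKC.
Qed.

Section Cls.
Variables (m q : nat).
Hypothesis m_gt0 : (0 < m)%N.

Lemma vdimS : (vdim m q).+1 = (q + m)%N.
Proof. rewrite /vdim prednK //; lia. Qed.

Lemma cls_sym a b : cls m q (a, b) = cls m q (b, a).
Proof. by rewrite /cls /= minnC maxnC. Qed.

Lemma cls_red a b : cls m q (redn m q a, redn m q b) = cls m q (a, b).
Proof. by rewrite /cls /= !redn_redn. Qed.

Lemma rep_cls a b : (0 < a)%N -> (0 < b)%N ->
  rep (cls m q (a, b)) = (minn (redn m q a) (redn m q b), maxn (redn m q a) (redn m q b)).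
Proof.
move=> a0 b0.
have ra0 := redn_gt0 m q a0; have rb0 := redn_gt0 m q b0.
have ral := redn_le q m_gt0 a; have rbl := redn_le q m_gt0 b.
have hs := vdimS.
rewrite /rep /cls /=.
set x := (@inord (vdim m q) (minn _ _), @inord (vdim m q) (maxn _ _)).
have Px : (x.1 <= x.2)%N.
  rewrite /x /= !inordK; lia.
rewrite (_ : sval _ = x); last first.
  by rewrite -[sval _]/(val _) val_insubd Px.
rewrite /x /= !inordK; try lia.
congr (_, _); lia.
Qed.

Lemma cls_rep (v : Vt (vdim m q)) : cls m q (rep v) = v.
Proof.
apply: val_inj.
case: v => [[x1 x2] /= H].
have hs := vdimS.
have l1 := ltn_ord x1; have l2 := ltn_ord x2.
rewrite /cls /rep /= !redn_id; try lia.
rewrite -[val _]/(val _) val_insubd /=.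
by rewrite (minn_idPl H) (maxn_idPr H) !inord_val H.
Qed.

End Cls.

Definition lab (Phi : nat -> nat -> label) a b := Phi (minn a b) (maxn a b).

Lemma eqpq_refl p q a : eqpq p q a a.
Proof. by rewrite /eqpq eqxx. Qed.

Lemma eqpqS_minmax p q a b a' b' : eqpq p q a a' -> eqpq p q b b' ->
  eqpqS p q (minn a b, maxn a b) (minn a' b', maxn a' b').
Proof.
move=> ha hb.
by case: (leqP a b) => h1; case: (leqP a' b') => h2; rewrite /eqpqS /= ha hb ?orbT.
Qed.

Section Lab.
Variables (Phi : nat -> nat -> label) (p q : nat).
Hypothesis HP : periodic_wedge Phi p q.

Lemma p_gt0 : (0 < p)%N.
Proof. by case: HP. Qed.

Lemma lab_eq a b a' b' : (0 < a)%N -> (0 < b)%N -> (0 < a')%N -> (0 < b')%N ->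
  eqpq p q a a' -> eqpq p q b b' -> lab Phi a b = lab Phi a' b'.
Proof.
move=> a0 b0 a'0 b'0 ha hb; case: HP => _ [H _].
apply: (H (minn a b, maxn a b) (minn a' b', maxn a' b')).
- rewrite /inSigma /= leq_min a0 b0 /=; lia.
- rewrite /inSigma /= leq_min a'0 b'0 /=; lia.
exact: eqpqS_minmax.
Qed.

Lemma lab_red m a b : (p %| m)%N -> (0 < m)%N -> (0 < a)%N -> (0 < b)%N ->
  lab Phi (redn m q a) (redn m q b) = lab Phi a b.
Proof.
move=> pm m0 a0 b0; apply: lab_eq; rewrite ?redn_gt0 //; exact: redn_eqpq p_gt0 pm m0.
Qed.

Lemma lab_shift a b : (q < a)%N -> (0 < b)%N -> lab Phi (a + p) b = lab Phi a b.
Proof.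
move=> qa b0; apply: lab_eq; rewrite ?eqpq_refl //; try lia.
rewrite /eqpq; apply/orP; right; rewrite leq_min; apply/andP; split.
  apply/andP; split; lia.
by rewrite modnDr.
Qed.

End Lab.

Local Open Scope ring_scope.

Section Mx.
Variable F : fieldType.

Definition ev N (w : Vt N) : 'rV[F]_#|{: Vt N}| := delta_mx 0 (enum_rank w).

Lemma eq_rank (T : finType) (x : T) (j : 'I_#|T|) : (j == enum_rank x) = (x == enum_val j).
Proof. by rewrite -(inj_eq enum_val_inj) enum_rankK eq_sym. Qed.

Lemma evE N (w : Vt N) j : ev w 0 j = (w == enum_val j)%:R.
Proof.
by rewrite mxE eqxx /= -(inj_eq enum_val_inj) enum_rankK eq_sym.
Qed.


Lemma evM N n' (M : 'M[F]_(#|{: Vt N}|, n')) (w : Vt N) : ev w *m M = row (enum_rank w) M.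
Proof. by rewrite rowE. Qed.

Lemma evA_rep Phi m q (w : Vt (vdim m q)) : ev w *m Amx F Phi m q =
  match Phi (rep w).1 (rep w).2 with
  | LN => ev (cls m q ((rep w).1.+1, (rep w).2.+1))
  | LS => ev (cls m q (1%N, (rep w).1.+1)) + ev (cls m q (1%N, (rep w).2.+1))
  | LE => 0 end.
Proof.
rewrite evM; apply/rowP => j; rewrite !mxE enum_rankK /out_edges.
case: (Phi _ _) => /=; rewrite ?mxE ?eqxx /= ?eq_rank ?addn0 ?natrD //.
Qed.

Lemma evP p q k (w : Vt (vdim (k * p) q)) :
  ev w *m Pmx F p q k = ev (cls p q (rep w)).
Proof.
rewrite evM; apply/rowP => j; rewrite !mxE enum_rankK eqxx /= eq_rank //.
Qed.

End Mx.


Lemma iter_pigeon (T : finType) (f : T -> option T) :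
  exists i j, (i < j)%N /\ forall y, iter i (obind f) (Some y) = iter j (obind f) (Some y).
Proof.
pose g (j : 'I_#|{ffun T -> option T}|.+1) := [ffun y => iter j (obind f) (Some y)].
case: (boolP [exists i : 'I_#|{ffun T -> option T}|.+1, exists j : 'I_#|{ffun T -> option T}|.+1, (i < j)%N && (g i == g j)]).
  move=> /existsP[i /existsP[j /andP[lij /eqP E]]].
  exists i, j; split => // y.
  by have := congr1 (fun h : {ffun T -> option T} => h y) E; rewrite /g !ffunE.
move=> H; exfalso.
have inj_g : injective g.
  move=> i j E; case: (ltngtP i j) => [lt|lt|eq]; last exact: val_inj.
  - exfalso; move/negP: H; apply; apply/existsP; exists i; apply/existsP; exists j.
    by rewrite lt E eqxx.
  - exfalso; move/negP: H; apply; apply/existsP; exists j; apply/existsP; exists i.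
    by rewrite lt E eqxx.
have := leq_card _ inj_g; by rewrite card_ord !card_ffun ltnn.
Qed.

Section Main.
Variables (F : fieldType) (Phi : nat -> nat -> label) (p q k : nat).
Hypothesis HP : periodic_wedge Phi p q.
Hypothesis k_gt0 : (0 < k)%N.

Local Notation m := (k * p)%N.

Lemma pP : (0 < p)%N. Proof. exact: p_gt0 HP. Qed.
Lemma mP : (0 < m)%N. Proof. by rewrite muln_gt0 k_gt0 pP. Qed.
Lemma pm : (p %| m)%N. Proof. exact: dvdn_mull. Qed.

Local Notation cl := (cls m q).
Local Notation A := (Amx F Phi m q).
Local Notation P := (Pmx F p q k).
Local Notation evv := (@ev F (vdim m q)).

Lemma cls_minmax m' a b : cls m' q (minn a b, maxn a b) = cls m' q (a, b).
Proof. by case: (leqP a b) => // _; rewrite cls_sym. Qed.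

Lemma clsS_l a c : (0 < a)%N -> cl ((redn m q a).+1, c) = cl (a.+1, c).
Proof.
move=> a0; by rewrite -(cls_red q mP (redn m q a).+1 c) -(cls_red q mP a.+1 c) (redn_S q mP).
Qed.

Lemma evA a b : (0 < a)%N -> (0 < b)%N ->
  evv (cl (a, b)) *m A = match lab Phi a b with
  | LN => evv (cl (a.+1, b.+1))
  | LS => evv (cl (a.+1, 1%N)) + evv (cl (b.+1, 1%N))
  | LE => 0 end.
Proof.
move=> a0 b0; rewrite evA_rep (rep_cls _ mP) //=.
rewrite -/(lab Phi _ _) (lab_red HP pm mP a0 b0).
have ra0 := redn_gt0 m q a0; have rb0 := redn_gt0 m q b0.
case: (lab Phi a b).
- have -> : cl ((minn (redn m q a) (redn m q b)).+1, (maxn (redn m q a) (redn m q b)).+1)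
          = cl ((redn m q a).+1, (redn m q b).+1).
    by case: (leqP (redn m q a) (redn m q b)) => // _; rewrite cls_sym.
  by rewrite clsS_l // cls_sym clsS_l // cls_sym.
- have -> : evv (cl (1%N, (minn (redn m q a) (redn m q b)).+1)) +
            evv (cl (1%N, (maxn (redn m q a) (redn m q b)).+1)) =
            evv (cl (1%N, (redn m q a).+1)) + evv (cl (1%N, (redn m q b).+1)).
    by case: (leqP (redn m q a) (redn m q b)) => // _; rewrite addrC.
  by rewrite (cls_sym _ _ 1%N) clsS_l // (cls_sym _ _ 1%N) clsS_l.
- by [].
Qed.


Definition Dv (a b : nat) : 'rV[F]_#|{: Vt (vdim m q)}| :=
  if (q < a)%N && (0 < b)%N then evv (cl (a, b)) - evv (cl ((a + p)%N, b)) else 0.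

Lemma DvA a b : (q < a)%N -> (0 < b)%N ->
  Dv a b *m A = match lab Phi a b with
  | LN => Dv a.+1 b.+1
  | LS => Dv a.+1 1
  | LE => 0 end.
Proof.
move=> qa b0; have a0 : (0 < a)%N by lia.
rewrite /Dv qa b0 /= mulmxBl !evA //; last lia.
rewrite (lab_shift HP qa b0).
case: (lab Phi a b).
- by rewrite ifT ?addSn //; apply/andP; split; lia.
- rewrite ifT ?addSn; last by apply/andP; split; lia.
  by rewrite opprD addrACA subrr addr0.
- by rewrite subrr.
Qed.

Lemma Dv_red a b : (0 < a)%N -> (0 < b)%N -> Dv (redn m q a) (redn m q b) = Dv a b.
Proof.
move=> a0 b0; rewrite /Dv redn_gtq (redn_gt0 m q b0) b0.
case: ifP => // _.
rewrite (cls_red q mP); congr (_ - _).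
rewrite -(cls_red q mP (redn m q a + p)) (redn_addr q mP) // (redn_redn q mP).
by rewrite (cls_red q mP).
Qed.

Lemma cls_dvd a b : cls p q (redn m q a, redn m q b) = cls p q (a, b).
Proof.
by rewrite -(cls_red q pP) (redn_dvd _ _ pP pm mP) (redn_dvd _ _ pP pm mP) (cls_red q pP).
Qed.

Lemma ev_P a b : (0 < a)%N -> (0 < b)%N -> evv (cl (a, b)) *m P = ev F (cls p q (a, b)).
Proof.
move=> a0 b0; rewrite evP (rep_cls _ mP) // cls_minmax; congr ev.
exact: cls_dvd.
Qed.

Lemma Dv_P a b : Dv a b *m P = 0.
Proof.
rewrite /Dv; case: ifP => [/andP[qa b0]|_]; last by rewrite mul0mx.
rewrite mulmxBl !ev_P //; try lia.
rewrite -(cls_red q pP (a + p)) (redn_addm _ qa) (cls_red q pP).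
by rewrite subrr.
Qed.

Local Notation I := ('I_(q + m).+1 * 'I_(q + m).+1)%type.

Definition phi (y : I) : option I :=
  if (q < y.1)%N && (0 < y.2)%N then
    match lab Phi y.1 y.2 with
    | LN => Some (inord (redn m q y.1.+1), inord (redn m q y.2.+1))
    | LS => Some (inord (redn m q y.1.+1), inord 1)
    | LE => None end
  else None.

Definition Dopt (o : option I) := if o is Some y then Dv y.1 y.2 else 0.

Lemma inord_redn i : (@inord (q + m) (redn m q i) : nat) = redn m q i.
Proof. by rewrite inordK // ltnS (redn_le q mP). Qed.

Lemma Dv_phi (y : I) : Dv y.1 y.2 *m A = Dopt (phi y).
Proof.
rewrite /phi; case: ifP => [/andP[qa b0]|H]; last by rewrite /Dv H mul0mx.
rewrite DvA //; case: (lab Phi _ _) => //=.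
- by rewrite !inord_redn Dv_red.
- rewrite inord_redn inordK; last by rewrite ltnS; have := mP; lia.
  have h1 : redn m q 1 = 1%N by apply: (redn_id mP); have := mP; lia.
  by rewrite -[in LHS](@Dv_red y.1.+1 1%N) // h1.
Qed.

Lemma Dopt_A o : Dopt o *m A = Dopt (obind phi o).
Proof. by case: o => [y|] /=; rewrite ?Dv_phi ?mul0mx. Qed.

Definition Dmat : 'M[F]_(#|{: I}|, #|{: Vt (vdim m q)}|) :=
  \matrix_(i < #|{: I}|) Dv (enum_val i).1 (enum_val i).2.

Definition phij j (y : I) := iter j (obind phi) (Some y).

Lemma Dmat_pow j : Dmat *m A ^+ j = \matrix_(i < #|{: I}|) Dopt (phij j (enum_val i)).
Proof.
elim: j => [|j IH].
  by rewrite expr0 mulmx1; apply/row_matrixP => i; rewrite !rowK.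
rewrite exprSr mulmxA IH; apply/row_matrixP => i.
by rewrite row_mul !rowK Dopt_A.
Qed.

Lemma Dv_sub a b : (Dv a b <= Dmat)%MS.
Proof.
case: (boolP ((q < a)%N && (0 < b)%N)) => [/andP[qa b0]|H]; last by rewrite /Dv (negbTE H) sub0mx.
have a0 : (0 < a)%N by lia.
rewrite -Dv_red //.
pose y : I := (inord (redn m q a), inord (redn m q b)).
have -> : Dv (redn m q a) (redn m q b) = row (enum_rank y) Dmat.
  by rewrite rowK enum_rankK /= !inord_redn.
exact: row_sub.
Qed.

Lemma Dopt_sub o : (Dopt o <= Dmat)%MS.
Proof. by case: o => [y|] /=; rewrite ?Dv_sub ?sub0mx. Qed.

Lemma tele a b t : (q < a)%N -> (0 < b)%N ->
  (evv (cl (a, b)) - evv (cl ((a + t * p)%N, b)) <= Dmat)%MS.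
Proof.
move=> qa b0; elim: t => [|t IH].
  by rewrite mul0n addn0 subrr sub0mx.
have -> : (a + t.+1 * p = (a + t * p) + p)%N by rewrite mulSn; lia.
rewrite -[evv (cl (a, b))](subrK (evv (cl ((a + t * p)%N, b)))) -addrA.
apply: addmx_sub => //.
have := Dv_sub (a + t * p) b; rewrite /Dv ifT //; apply/andP; split => //; lia.
Qed.

Lemma redp a b : (0 < a)%N -> (0 < b)%N ->
  (evv (cl (a, b)) - evv (cl (redn p q a, b)) <= Dmat)%MS.
Proof.
move=> a0 b0; case: (leqP a q) => qa.
  by rewrite redn_small // subrr sub0mx.
rewrite redn_big //.
have Ea : a = (q.+1 + (a - q.+1) %% p + (a - q.+1) %/ p * p)%N.
  have := divn_eq (a - q.+1)%N p; move: ((a - q.+1) %/ p)%N ((a - q.+1) %% p)%N => x y; lia.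
rewrite {1}Ea -opprB eqmx_opp; apply: tele => //; lia.
Qed.

Lemma redp2 a b : (0 < a)%N -> (0 < b)%N ->
  (evv (cl (a, b)) - evv (cl (redn p q a, redn p q b)) <= Dmat)%MS.
Proof.
move=> a0 b0.
rewrite -[evv (cl (a, b))](subrK (evv (cl (redn p q a, b)))) -addrA.
apply: addmx_sub; first exact: redp.
rewrite (cls_sym _ _ (redn p q a) b) (cls_sym _ _ (redn p q a) (redn p q b)).
by apply: redp => //; apply: redn_gt0.
Qed.

Definition Emx : 'M[F]_(#|{: Vt (vdim p q)}|, #|{: Vt (vdim m q)}|) :=
  \matrix_(i < #|{: Vt (vdim p q)}|) evv (cl (rep (enum_val i))).

Lemma rep_gt0 N (v : Vt N) : (0 < (rep v).1)%N /\ (0 < (rep v).2)%N.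
Proof. by []. Qed.

Lemma ker_sub : (kermx P <= Dmat)%MS.
Proof.
have -> : kermx P = kermx P *m (1%:M - P *m Emx).
  by rewrite mulmxBr mulmx1 mulmxA mulmx_ker mul0mx subr0.
apply: mulmx_sub; apply/row_subP => i.
rewrite rowE mulmxBr mulmx1 mulmxA.
have -> : delta_mx 0 i = evv (enum_val i) by rewrite /ev enum_valK.
rewrite evP evM rowK enum_rankK.
set v := enum_val i.
rewrite -{1}(cls_rep mP v).
case: (rep_gt0 v); case: (rep v) => a b /= a0 b0.
rewrite (rep_cls _ pP) // cls_minmax.
exact: redp2.
Qed.

Lemma Dmat_ker : (Dmat <= kermx P)%MS.
Proof.
apply/row_subP => i; rewrite rowK sub_kermx; apply/eqP; exact: Dv_P.
Qed.

Lemma DmatA_sub : (Dmat *m A <= Dmat)%MS.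
Proof.
apply/row_subP => i; rewrite row_mul rowK Dv_phi; exact: Dopt_sub.
Qed.

Lemma restrA_per : exists i j, (i < j)%N /\
  restrA F Phi p q k ^+ i = restrA F Phi p q k ^+ j.
Proof.
set B := kerB F p q k.
set M := restrA F Phi p q k.
have hBK : (B <= kermx P)%MS by rewrite /B /kerB eq_row_base.
have hKB : (kermx P <= B)%MS by rewrite /B /kerB eq_row_base.
have hBD : (B <= Dmat)%MS := submx_trans hBK ker_sub.
have hBA : (B *m A <= B)%MS.
  apply: submx_trans (submxMr A hBD) _; apply: submx_trans DmatA_sub _.
  exact: submx_trans Dmat_ker hKB.
have hM : B *m A = M *m B by rewrite /M /restrA -/B mulmxKpV.
have hpow j : B *m A ^+ j = M ^+ j *m B.
  elim: j => [|j IH]; first by rewrite !expr0 mulmx1 mul1mx.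
  by rewrite !exprSr -!mulmxE mulmxA IH -mulmxA hM mulmxA.
have [i [j [lij Hij]]] := iter_pigeon phi.
exists i, j; split => //.
apply: (row_free_inj (row_base_free (kermx P))).
rewrite -/B -!hpow.
have [W ->] := submxP hBD.
rewrite -!mulmxA !Dmat_pow; congr (W *m _); apply/row_matrixP => r.
by rewrite !rowK /phij Hij.
Qed.

End Main.

Lemma map_mx_expr (F1 F2 : fieldType) (f : {rmorphism F1 -> F2}) r (M : 'M[F1]_r) j :
  map_mx f (M ^+ j) = (map_mx f M) ^+ j.
Proof.
elim: j => [|j IH]; first by rewrite !expr0 map_mx1.
by rewrite !exprS -!mulmxE map_mxM IH.
Qed.

Lemma vec_pow (F : fieldType) r (M : 'M[F]_r) (v : 'rV_r) a j :
  v *m M = a *: v -> v *m M ^+ j = a ^+ j *: v.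
Proof.
move=> H; elim: j => [|j IH]; first by rewrite !expr0 mulmx1 scale1r.
by rewrite exprSr -mulmxE mulmxA IH -scalemxAl H scalerA -exprSr.
Qed.

Lemma roots_per r (M : 'M[rat]_r) i j : (i < j)%N -> M ^+ i = M ^+ j ->
  forall z : algC, root (map_poly ratr (char_poly M)) z ->
  z = 0 \/ exists2 n, (0 < n)%N & n.-primitive_root z.
Proof.
move=> lij Hij z; rewrite map_char_poly -eigenvalue_root_char.
move=> /eigenvalueP [v Hv vn0].
have := vec_pow j Hv; rewrite -map_mx_expr -Hij map_mx_expr (vec_pow i Hv).
move=> /eqP; rewrite -subr_eq0 -scalerBl scaler_eq0 (negbTE vn0) orbF subr_eq0.
have -> : j = (i + (j - i))%N by rewrite subnKC // ltnW.
rewrite exprD -{1}(mulr1 (z ^+ i)) => /eqP /mulfI H.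
case: (boolP (z == 0)) => [/eqP ->|zn0]; first by left.
right.
have u : z ^+ (j - i) = 1.
  by apply: esym; apply: H; rewrite expf_neq0.
have ji0 : (0 < j - i)%N by rewrite subn_gt0.
have [n pn _] := prim_order_exists ji0 u.
by exists n => //; exact: prim_order_gt0 pn.
Qed.

Lemma cyclo_factor (c : {poly rat}) : c \is monic ->
  (forall z : algC, root (map_poly ratr c) z ->
     z = 0 \/ exists2 n, (0 < n)%N & n.-primitive_root z) ->
  exists d s, all (fun n => 0 < n)%N s /\
    c = 'X^d * \prod_(n <- s) map_poly (intr : int -> rat) 'Phi_n.
Proof.
move: {2}(size c) (leqnn (size c)) => N.
elim: N c => [|N IH] c Hs mc Hr.
  move: Hs; rewrite leqn0 size_poly_eq0 => /eqP c0.
  by move: mc; rewrite c0 monicE lead_coef0 eq_sym oner_eq0.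
case: (eqVneq (size c) 1%N) => [s1|s1].
  exists 0%N, [::]; split => //; rewrite expr0 big_nil mulr1.
  move/eqP/size_poly1P: s1 => [c0 _ Ec]; move: mc; rewrite Ec monicE lead_coefC => /eqP ->.
  by [].
have [z rz] : exists z : algC, root (map_poly ratr c) z.
  by apply/closed_rootP; rewrite size_map_poly.
have step : forall g, g \is monic -> (1 < size g)%N -> g %| c ->
    c = c %/ g * g /\ exists d s, all (fun n => 0 < n)%N s /\
      c %/ g = 'X^d * \prod_(n <- s) map_poly (intr : int -> rat) 'Phi_n.
  move=> g mg sg dg; set c' := c %/ g.
  have Ec : c = c' * g by rewrite divpK.
  split => //.
  have mc' : c' \is monic by rewrite -(monicMr _ mg) -Ec.
  apply: IH => //.
    move: Hs; rewrite Ec size_Mmonic // ?monic_neq0 //.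
    move: (size c') (size g) sg => a b; clear; lia.
  by move=> z' rz'; apply: Hr; rewrite Ec rmorphM rootM rz'.
case: (Hr z rz) => [z0|[n n0 pz]].
  have dX : 'X %| c.
    have : root c 0 by rewrite -(fmorph_root (ratr : rat -> algC)) rmorph0 -z0.
    by rewrite root_factor_theorem subr0.
  have sX : (1 < size ('X : {poly rat}))%N by rewrite size_polyX.
  have [Ec [d [s [Hs' Ec']]]] := step 'X (monicX _) sX dX.
  exists d.+1, s; split => //.
  by rewrite Ec Ec' exprSr mulrAC.
have [p0 [Ep0 mp0] dvp0] := minCpolyP z.
have sp0 : (1 < size p0)%N by rewrite -(size_map_poly (ratr : rat -> algC)) -Ep0 size_minCpoly.
have dp0 : p0 %| c by rewrite -dvp0.
have [Ec [d [s [Hs' Ec']]]] := step p0 mp0 sp0 dp0.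
have Ep : p0 = map_poly (intr : int -> rat) 'Phi_n.
  apply: (map_inj_poly (fmorph_inj (ratr : rat -> algC))); first by rewrite rmorph0.
  rewrite -Ep0 (minCpoly_cyclotomic pz) -(Cintr_Cyclotomic pz) -map_poly_comp.
  by apply: eq_map_poly => x /=; rewrite rmorph_int.
exists d, (n :: s); split; first by rewrite /= n0.
by rewrite Ec Ec' big_cons Ep mulrA mulrAC.
Qed.

Lemma cp_cast (F : fieldType) r r' n (e : r = r') (X : 'M[F]_(r, n)) (A : 'M_n) :
  char_poly (castmx (e, erefl n) X *m A *m pinvmx (castmx (e, erefl n) X))
  = char_poly (X *m A *m pinvmx X).
Proof. by case: r' / e; rewrite castmx_id. Qed.

Section Transfer.
Variables (F1 F2 : fieldType) (f : {rmorphism F1 -> F2}).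

Lemma PmxE p q k : Pmx F2 p q k = map_mx f (Pmx F1 p q k).
Proof. by apply/matrixP => i j; rewrite !mxE rmorph_nat. Qed.

Lemma AmxE Phi m q : Amx F2 Phi m q = map_mx f (Amx F1 Phi m q).
Proof. by apply/matrixP => i j; rewrite !mxE rmorph_nat. Qed.

Lemma restrA_map Phi p q k :
  char_poly (restrA F2 Phi p q k) = map_poly f (char_poly (restrA F1 Phi p q k)).
Proof.
rewrite /restrA /kerB PmxE AmxE -map_kermx map_char_poly.
set K := kermx (Pmx F1 p q k).
rewrite (map_mxM f (row_base K *m Amx F1 Phi (k * p) q)) (map_mxM f (row_base K)).
by rewrite map_pinvmx map_row_base cp_cast.
Qed.

End Transfer.

Unset Implicit Arguments.
Set Strict Implicit.

Theorem proposition5p3 (R : realType) (Phi : nat -> nat -> label) (p q k : nat) :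
  periodic_wedge Phi p q -> (0 < k)%N ->
  exists (d : nat) (s : seq nat),
    all (fun n => 0 < n)%N s /\
    char_poly (restrA R Phi p q k)
      = 'X^d * \prod_(n <- s) map_poly (fun z : int => z%:~R) 'Phi_n.
Proof.
move=> HP k0.
have [i [j [lij Hij]]] := restrA_per rat HP k0.
have [d [s [Hs Hc]]] := cyclo_factor (char_poly_monic _) (roots_per lij Hij).
exists d, s; split => //.
rewrite (restrA_map (ratr : rat -> R)) Hc rmorphM rmorphXn /= map_polyX rmorph_prod.
congr (_ * _); apply: eq_bigr => n _.
transitivity (map_poly ((ratr : rat -> R) \o (intr : int -> rat)) 'Phi_n).
  by rewrite map_poly_comp.
by apply: eq_map_poly => x /=; rewrite rmorph_int.
Qed.
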